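(* Let $G$ be a finitely generated group, and let $M$ be a sequence of probability measures on $G$ that measures index uniformly. Then the $\limsup$ in the definition of $\textup{dc}_M(G)$ is actually a limit, and $\textup{dc}_{M'}(G)=\textup{dc}_M(G)$ for every other sequence $M'$ of probability measures on $G$ that measures index uniformly. Moreover, if $G$ is amenable then $\textup{dc}_\mu(G)=\textup{dc}_M(G)$ for every finitely additive left-invariant mean $\mu$ on $G$.
   Context: A sequence $M=(\mu_n)$ of probability measures measures index uniformly if $\mu_n(xH)\to1/[G:H]$ uniformly over $x\in G$ and subgroups $H$ (with $1/[G:H]=0$ for infinite index). $\textup{dc}_M(G)=\limsup_n(\mu_n\times\mu_n)(\{(x,y):xy=yx\})$. For a finitely additive left-invariant mean $\mu$ (positive normalised left-invariant linear functional on $\ell^\infty(G)$, $\mu(X)=\int1_X\,d\mu$), $\textup{dc}_\mu(G)=\int_x\int_y1_{\{xy=yx\}}\,d\mu(x)\,d\mu(y)$. *)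

(* Defs.v *)
From mathcomp Require Import all_boot all_order all_algebra.
From mathcomp Require Import all_classical all_reals all_analysis.
From mathcomp Require Import finmap.
Set Implicit Arguments. Unset Strict Implicit. Unset Printing Implicit Defensive.
Import numFieldNormedType.Exports.
Import Order.TTheory GRing.Theory Num.Theory.
Local Open Scope classical_set_scope.
Local Open Scope ring_scope.

Section GroupDefs.
Variable G : groupType.
Local Notation "x * y" := (monoid.mul x y) : group_scope.
Local Notation "1" := (@monoid.one G) : group_scope.
Local Notation "x ^-1" := (monoid.inv x) : group_scope.

Definition is_subgroup (H : set G) : Prop :=
  H 1%g /\ (forall x y, H x -> H y -> H (x * y)%g) /\ (forall x, H x -> H (x^-1)%g).

Definition finitely_generated : Prop :=
  exists s : seq G, forall H : set G,
    is_subgroup H -> (forall x, x \in s -> H x) -> H = setT.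

Definition lcoset (x : G) (H : set G) : set G := [set (x * h)%g | h in H].

Definition lcosets (H : set G) : set (set G) := [set lcoset x H | x in setT].

(* 1/[G:H], with the convention 1/[G:H] = 0 when the index is infinite *)
Definition inv_index (R : realType) (H : set G) : R :=
  if `[< finite_set (lcosets H) >]
  then ((#|` fset_set (lcosets H)|)%N%:R)^-1
  else 0.

(* probability measures on the (countable, discrete) group G, given by their
   mass functions *)
Definition is_prob (R : realType) (mu : G -> R) : Prop :=
  (forall x, 0 <= mu x) /\ (\esum_(x in [set: G]) (mu x)%:E = 1%E).

Definition pmeas (R : realType) (mu : G -> R) (A : set G) : R :=
  fine (\esum_(x in A) (mu x)%:E).

Definition measures_index_uniformly (R : realType) (M : nat -> G -> R) : Prop :=
  (forall n, is_prob (M n)) /\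
  forall eps : R, 0 < eps -> exists N : nat, forall n, (N <= n)%N ->
    forall (x : G) (H : set G), is_subgroup H ->
      `| pmeas (M n) (lcoset x H) - inv_index R H | < eps.

Definition commuting_pairs : set (G * G) := [set p | (p.1 * p.2)%g = (p.2 * p.1)%g].

Definition dc_n (R : realType) (mu : G -> R) : R :=
  fine (\esum_(p in commuting_pairs) (mu p.1 * mu p.2)%:E).

Definition dc_seq (R : realType) (M : nat -> G -> R) : nat -> R :=
  fun n => dc_n (M n).

Definition dcM (R : realType) (M : nat -> G -> R) : R := limn_sup (dc_seq M).

(* means: finitely additive left-invariant means, i.e. positive normalised
   left-invariant linear functionals on l^oo(G).  A functional is given as a
   map on all functions G -> R, but all requirements only concern bounded
   functions (its values on unbounded functions are irrelevant). *)
Definition bounded_fun (R : realType) (f : G -> R) : Prop :=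
  exists C : R, forall x, `|f x| <= C.

Definition is_left_invariant_mean (R : realType) (m : (G -> R) -> R) : Prop :=
  (forall (a b : R) (f g : G -> R), bounded_fun f -> bounded_fun g ->
      m (fun x => a * f x + b * g x) = a * m f + b * m g) /\
  (forall f : G -> R, bounded_fun f -> (forall x, 0 <= f x) -> 0 <= m f) /\
  (m (fun _ => 1) = 1) /\
  (forall (g : G) (f : G -> R), bounded_fun f ->
      m (fun x => f (g * x)%g) = m f).

Definition amenable (R : realType) : Prop :=
  exists m : (G -> R) -> R, is_left_invariant_mean m.

Definition comm_ind (R : realType) (x y : G) : R :=
  if `[< (x * y)%g = (y * x)%g >] then 1 else 0.

Definition dc_mean (R : realType) (m : (G -> R) -> R) : R :=
  m (fun y => m (fun x => comm_ind R x y)).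

End GroupDefs.

(* Main.v *)
Require Import Defs.
From mathcomp Require Import all_boot all_order all_algebra.
From mathcomp Require Import all_classical all_reals all_analysis.
From mathcomp Require Import finmap.
Import numFieldNormedType.Exports.
Import Order.TTheory GRing.Theory Num.Theory.
Local Open Scope classical_set_scope.
Local Open Scope ring_scope.
Set Implicit Arguments. Unset Strict Implicit. Unset Printing Implicit Defensive.
From mathcomp Require Import lra ring.

Section GroupPart.
Variable G : groupType.
Implicit Types (H N : set G) (x y g : G).

Lemma sg1 H : is_subgroup H -> H 1%g.
Proof. by case. Qed.
Lemma sgM H x y : is_subgroup H -> H x -> H y -> H (x * y)%g.
Proof. by case=> _ [+ _]; apply. Qed.
Lemma sgV H x : is_subgroup H -> H x -> H (x^-1)%g.
Proof. by case=> _ [_ +]; apply. Qed.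
Lemma sgVE H x : is_subgroup H -> H (x^-1)%g <-> H x.
Proof. by move=> sH; split=> [/(sgV sH)|/(sgV sH)//]; rewrite invgK. Qed.
Lemma sgMr H x y : is_subgroup H -> H y -> (H (x * y)%g <-> H x).
Proof.
move=> sH Hy; split=> [Hxy|Hx]; last exact: sgM.
by rewrite -(mulgK y x); apply: sgM => //; apply: sgV.
Qed.
Lemma sgMl H x y : is_subgroup H -> H x -> (H (x * y)%g <-> H y).
Proof.
move=> sH Hx; split=> [Hxy|Hy]; last exact: sgM.
by rewrite -(mulKg x y); apply: sgM => //; apply: sgV.
Qed.

Lemma sgT : is_subgroup [set: G].
Proof. by []. Qed.
Lemma sgI H1 H2 : is_subgroup H1 -> is_subgroup H2 -> is_subgroup (H1 `&` H2).
Proof.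
move=> s1 s2; split; first by split; apply: sg1.
split=> [x y [? ?] [? ?]|x [? ?]]; split; by [apply: sgM|apply: sgV].
Qed.

Lemma lcosetE x H g : lcoset x H g <-> H (x^-1 * g)%g.
Proof.
split=> [[h Hh <-]|Hg]; first by rewrite mulKg.
by exists (x^-1 * g)%g => //; rewrite mulVKg.
Qed.

Lemma lcoset1 H : lcoset 1%g H = H.
Proof. by apply/funext=> g; apply/propext; rewrite lcosetE invg1 mul1g. Qed.

Definition cover H (xs : seq G) := forall g, exists2 x, x \in xs & H (x^-1 * g)%g.

Lemma cover_setI H1 H2 xs1 xs2 : is_subgroup H1 -> is_subgroup H2 ->
  cover H1 xs1 -> cover H2 xs2 -> exists zs, cover (H1 `&` H2) zs.
Proof.
move=> s1 s2 c1 c2.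
have gen : forall L : seq (G * G)%type, exists zs : seq G, forall g,
    (exists2 p : (G * G)%type, p \in L & H1 (p.1^-1 * g)%g /\ H2 (p.2^-1 * g)%g) ->
    exists2 z, z \in zs & (H1 `&` H2) (z^-1 * g)%g.
  elim=> [|p L [zs IH]]; first by exists [::] => g [].
  have [[z [z1 z2]]|nz] := pselect (exists z, H1 (p.1^-1 * z)%g /\ H2 (p.2^-1 * z)%g).
    exists (z :: zs) => g [q]; rewrite inE => /orP[/eqP->|qL] [g1 g2]; last first.
      have [w wz Hw] := IH g (ex_intro2 _ _ q qL (conj g1 g2)).
      by exists w => //; rewrite inE wz orbT.
    exists z; first by rewrite inE eqxx.
    have e i : (z^-1 * g = (i^-1 * z)^-1 * (i^-1 * g))%g.
      by rewrite invgM invgK !mulgA mulgK.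
    by split; [rewrite (e p.1)|rewrite (e p.2)]; apply: sgM => //; apply: sgV.
  exists zs => g [q]; rewrite inE => /orP[/eqP->|qL] [g1 g2].
    by exfalso; apply: nz; exists g.
  exact: IH (ex_intro2 _ _ q qL (conj g1 g2)).
have [zs Hzs] := gen [seq (a, b) | a <- xs1, b <- xs2].
exists zs => g; apply: Hzs.
have [a a1 Ha] := c1 g; have [b b2 Hb] := c2 g.
by exists (a, b) => //; apply: allpairs_f.
Qed.

Lemma transversal N xs : is_subgroup N -> cover N xs ->
  exists ts : seq G, forall g, count (fun t => `[< N (t^-1 * g)%g >]) ts = 1%N.
Proof.
move=> sN cN.
have gen : forall xs : seq G, exists ts : seq G,
   (forall g, (count (fun t => `[< N (t^-1 * g)%g >]) ts <= 1)%N) /\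
   (forall g, (exists2 x, x \in xs & N (x^-1 * g)%g) ->
     exists2 t, t \in ts & N (t^-1 * g)%g).
  elim=> [|x xs' [ts [IH1 IH2]]]; first by exists [::]; split=> // g [].
  have [[t tts Ht]|nt] := pselect (exists2 t, t \in ts & N (t^-1 * x)%g).
    exists ts; split=> // g [y]; rewrite inE => /orP[/eqP->|yx] Hy; last first.
      by apply: IH2; exists y.
    exists t => //; have -> : (t^-1 * g = (t^-1 * x) * (x^-1 * g))%g by rewrite mulgA mulgK.
    exact: sgM.
  exists (x :: ts); split=> [g|g [y]]; last first.
    rewrite inE => /orP[/eqP->|yx] Hy; first by exists x; rewrite ?inE ?eqxx.
    by have [t tt Ht] := IH2 g (ex_intro2 _ _ y yx Hy); exists t; rewrite ?inE ?tt ?orbT.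
  rewrite /=; case: (asboolP (N (x^-1 * g)%g)) => Hx /=; last exact: IH1.
  suff -> : count (fun t => `[< N (t^-1 * g)%g >]) ts = 0%N by [].
  apply/eqP; rewrite -leqn0 leqNgt -has_count; apply/negP => /hasP[t tt /asboolP Ht].
  apply: nt; exists t => //.
  have -> : (t^-1 * x = (t^-1 * g) * (x^-1 * g)^-1)%g by rewrite invgM invgK !mulgA mulgK.
  by apply: sgM => //; apply: sgV.
have [ts [H1 H2]] := gen xs; exists ts => g.
apply/eqP; rewrite eqn_leq H1 /= lt0n -lt0n -has_count.
have [t tt Ht] := H2 g (cN g); apply/hasP; exists t => //; exact/asboolP.
Qed.


Section Sig.
Variables (s : seq G) (K : nat).
Hypothesis gen : forall H, is_subgroup H -> (forall x, x \in s -> H x) -> H = setT.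

Definition Sig := ({ffun 'I_(size s) -> {ffun 'I_K -> 'I_K}} * 'I_K *
  {ffun 'I_K -> {ffun 'I_K -> bool}})%type.

Definition realizes (sg : Sig) H (X : 'I_K -> G) :=
  [/\ is_subgroup H, (forall g, exists a, H ((X a)^-1 * g)%g),
    (forall i a, H ((X (sg.1.1 i a))^-1 * (nth 1%g s i * X a))%g),
    H (X sg.1.2) & (forall a b, sg.2 a b = `[< H ((X b)^-1 * X a)%g >])].

Lemma sig_exists H X : is_subgroup H -> (forall g, exists a, H ((X a)^-1 * g)%g) ->
  exists sg, realizes sg H X.
Proof.
move=> sH cX.
have [f Hf] := @fin_all_exists _ (fun _ => 'I_K)
  (fun (ia : ('I_(size s) * 'I_K)%type) b => H ((X b)^-1 * (nth 1%g s (ia.1 : nat) * X ia.2))%g) (fun ia => cX _).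
have [a0 Ha0] := cX 1%g.
exists ([ffun i => [ffun a => f (i, a)]], a0,
        [ffun a => [ffun b => `[< H ((X b)^-1 * X a)%g >]]]).
split=> //=; first by move=> i a; rewrite !ffunE; exact: (Hf (i, a)).
  by rewrite mulg1 in Ha0; rewrite -(invgK (X a0)); apply: sgV.
by move=> a b; rewrite !ffunE.
Qed.

Lemma sig_unique sg H X H' X' : realizes sg H X -> realizes sg H' X' -> H = H'.
Proof.
move=> [sH cX sX a0X EX] [sH' cX' sX' a0X' EX'].
pose S := [set g : G | forall a b, H ((X b)^-1 * (g * X a))%g <->
                                   H' ((X' b)^-1 * (g * X' a))%g].
have EE : forall a b, H ((X b)^-1 * X a)%g <-> H' ((X' b)^-1 * X' a)%g.
  by move=> a b; split=> h; apply/asboolP; [rewrite -EX' EX | rewrite -EX EX']; apply/asboolP.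
have S1 : S 1%g by move=> a b; rewrite !mul1g; apply: EE.
have SM : forall g h, S g -> S h -> S (g * h)%g.
  move=> g h Sg Sh a b.
  have [c Hc] := cX (h * X a)%g.
  have Hc' : H' ((X' c)^-1 * (h * X' a))%g.
    by apply/(Sh a c).
  have e : forall Y : 'I_K -> G, ((Y b)^-1 * (g * h * Y a) =
      ((Y b)^-1 * (g * Y c)) * ((Y c)^-1 * (h * Y a)))%g.
    by move=> Y; rewrite !mulgA mulgK.
  rewrite e (e X') (sgMr _ sH Hc) (sgMr _ sH' Hc'); exact: Sg.
have SV : forall g, S g -> S (g^-1)%g.
  move=> g Sg a b.
  have e : forall Y : 'I_K -> G, ((Y b)^-1 * (g^-1 * Y a) =
      ((Y a)^-1 * (g * Y b))^-1)%g.
    by move=> Y; rewrite !invgM !invgK mulgA.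
  by rewrite e (e X') (sgVE _ sH) (sgVE _ sH'); apply: Sg.
have Ss : forall x, x \in s -> S x.
  move=> x xs a b.
  have xi : x = nth 1%g s (Ordinal (etrans (index_mem x s) xs)) by rewrite nth_index.
  have Hs := sX (Ordinal (etrans (index_mem x s) xs)) a.
  have Hs' := sX' (Ordinal (etrans (index_mem x s) xs)) a.
  rewrite -xi in Hs Hs'.
  set c := sg.1.1 _ a in Hs Hs'.
  have e : forall Y : 'I_K -> G, ((Y b)^-1 * (x * Y a) =
      ((Y b)^-1 * Y c) * ((Y c)^-1 * (x * Y a)))%g.
    by move=> Y; rewrite !mulgA mulgK.
  by rewrite e (e X') (sgMr _ sH Hs) (sgMr _ sH' Hs'); apply: EE.
have ST : S = setT by apply: gen => //; split=> //; split.
apply/funext => g; apply/propext.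
have : S g by rewrite ST.
move=> /(_ sg.1.2 sg.1.2).
have e : forall Y : 'I_K -> G, ((Y sg.1.2)^-1 * (g * Y sg.1.2) =
   ((Y sg.1.2)^-1 * g) * Y sg.1.2)%g by move=> Y; rewrite mulgA.
rewrite e (e X') (sgMr _ sH a0X) (sgMr _ sH' a0X') (sgMl _ sH) ?(sgMl _ sH') //;
  by apply: sgV.
Qed.

Lemma fam (L : seq Sig) : exists N (xs : seq G), [/\ is_subgroup N, cover N xs &
  forall sg, sg \in L -> forall H X, realizes sg H X -> N `<=` H].
Proof.
elim: L => [|sg L [N [xs [sN cN HN]]]].
  exists setT, [:: 1%g]; split=> // g; exists 1%g; rewrite ?inE //.
have [[H [X rX]]|nr] := pselect (exists H X, realizes sg H X).
  have [sH cX _ _ _] := rX.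
  have cH : cover H [seq X a | a <- enum 'I_K].
    by move=> g; have [a Ha] := cX g; exists (X a) => //; apply: map_f; rewrite mem_enum.
  have [zs czs] := cover_setI sN sH cN cH.
  exists (N `&` H), zs; split=> //; first exact: sgI.
  move=> sg'; rewrite inE => /orP[/eqP->|sgL] H' X' r'.
    by rewrite -(sig_unique rX r'); apply: subIsetr.
  by apply: subset_trans (HN _ sgL _ _ r'); apply: subIsetl.
exists N, xs; split=> // sg'; rewrite inE => /orP[/eqP->|sgL] H' X' r'.
  by exfalso; apply: nr; exists H', X'.
exact: HN sgL _ _ r'.
Qed.

End Sig.

Lemma fg_N K : finitely_generated G -> exists N (ts : seq G), [/\ is_subgroup N,
  (forall g, count (fun t => `[< N (t^-1 * g)%g >]) ts = 1%N) &
  (forall H xs, is_subgroup H -> (size xs <= K)%N -> cover H xs -> N `<=` H)].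
Proof.
move=> [s gen].
have [N [xs [sN cN HN]]] := fam gen (enum {: ({ffun 'I_(size s) -> {ffun 'I_K -> 'I_K}} * 'I_K * {ffun 'I_K -> {ffun 'I_K -> bool}})%type}).
have [ts Hts] := transversal sN cN.
exists N, ts; split=> // H ys sH sz cH.
pose X := fun a : 'I_K => nth 1%g ys a.
have cX : forall g, exists a, H ((X a)^-1 * g)%g.
  move=> g; have [y yys Hy] := cH g.
  have lt : (index y ys < K)%N by apply: leq_trans sz; rewrite index_mem.
  by exists (Ordinal lt); rewrite /X /= nth_index.
have [sg rsg] := sig_exists s sH cX.
by apply: HN rsg; rewrite mem_enum.
Qed.

End GroupPart.

Section IndexPart.
Variables (R : realType) (G : groupType).
Implicit Types (H N : set G) (x y g : G).

Definition ind (A : set G) : G -> R := fun x => if `[< A x >] then 1 else 0.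
Definition cent y : set G := [set x | (x * y = y * x)%g].
Definition CN N : set G := [set y | forall n, N n -> (n * y = y * n)%g].

Lemma ind_ge0 A x : 0 <= ind A x.
Proof. by rewrite /ind; case: asboolP. Qed.
Lemma ind_le1 A x : ind A x <= 1.
Proof. by rewrite /ind; case: asboolP. Qed.
Lemma indT A x : A x -> ind A x = 1.
Proof. by rewrite /ind; case: asboolP. Qed.
Lemma indF A x : ~ A x -> ind A x = 0.
Proof. by rewrite /ind; case: asboolP. Qed.

Lemma sg_cent y : is_subgroup (cent y).
Proof.
split; first by rewrite /cent /= mul1g mulg1.
split=> [a b ha hb|a ha].
  by apply: commute_sym; apply: commuteM; apply: commute_sym.
by apply: commute_sym; apply: commuteV; apply: commute_sym.
Qed.

Lemma sg_CN N : is_subgroup (CN N).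
Proof.
split; first by move=> n _; rewrite mul1g mulg1.
split=> [a b ha hb n Nn|a ha n Nn].
  by apply: commuteM; [apply: ha|apply: hb].
by apply: commuteV; apply: ha.
Qed.

Lemma sum_cst T (l : seq T) (a : R) : \sum_(t <- l) a = (size l)%:R * a.
Proof.
elim: l => [|t l IH]; first by rewrite big_nil mul0r.
by rewrite big_cons IH /= -nat1r mulrDl mul1r.
Qed.

Lemma sum_ind_count T (l : seq T) (P : T -> Prop) :
  \sum_(t <- l) (if `[< P t >] then 1 else 0 : R) = (count (fun t => `[< P t >]) l)%:R.
Proof.
elim: l => [|t l IH]; first by rewrite big_nil.
by rewrite big_cons IH /= natrD; case: asboolP.
Qed.

Lemma inv_index_ge0 H : 0 <= inv_index R H.
Proof. by rewrite /inv_index; case: asboolP => // _; rewrite invr_ge0. Qed.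

Lemma inv_index_le1 H : inv_index R H <= 1.
Proof.
rewrite /inv_index; case: asboolP => // _.
case: (size _) => [|n]; first by rewrite invr0.
by rewrite invf_le1 // ?ler1n // ltr0n.
Qed.

Lemma lcosetsP H c : lcosets H c <-> exists x, c = lcoset x H.
Proof. by split=> [[x _ <-]|[x ->]]; [exists x|exists x]. Qed.

Lemma lcoset_self H g : is_subgroup H -> lcoset g H g.
Proof. by move=> sH; apply/lcosetE; rewrite mulVg; apply: sg1. Qed.

Lemma lcoset_eq H x g : is_subgroup H -> lcoset x H g -> lcoset x H = lcoset g H.
Proof.
move=> sH /lcosetE Hg; apply/funext => z; apply/propext; rewrite !lcosetE.
have -> : (x^-1 * z = (x^-1 * g) * (g^-1 * z))%g by rewrite mulgA mulgK.
exact: sgMl.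
Qed.

Lemma in_lcosets H c g : is_subgroup H -> lcosets H c -> (c g <-> c = lcoset g H).
Proof.
move=> sH /lcosetsP [x ->]; split=> [h|->]; first exact: lcoset_eq.
exact: lcoset_self.
Qed.

Lemma reps H (cs : seq (set G)) : (forall c, c \in cs -> lcosets H c) ->
  exists xs : seq G, size xs = size cs /\ forall c, c \in cs -> exists2 x, x \in xs & c = lcoset x H.
Proof.
elim: cs => [|c cs IH] hc; first by exists [::].
have [|xs [sz Hxs]] := IH; first by move=> d dcs; apply: hc; rewrite inE dcs orbT.
have /lcosetsP [x ->] := hc c (mem_head _ _).
exists (x :: xs); split; first by rewrite /= sz.
move=> d; rewrite inE => /orP[/eqP->|dcs]; first by exists x; rewrite ?mem_head.
by have [y ys ->] := Hxs d dcs; exists y; rewrite // inE ys orbT.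
Qed.

Lemma inv_index_nocover H K : is_subgroup H ->
  (forall xs, (size xs <= K)%N -> ~ cover H xs) -> inv_index R H <= (K.+1%:R)^-1.
Proof.
move=> sH nc; rewrite /inv_index; case: asboolP => fin; last by rewrite invr_ge0.
set F := fset_set (lcosets H).
have [|xs [sz Hxs]] := @reps H F.
  by move=> c; rewrite in_fset_set // => /set_mem.
have cv : cover H xs.
  move=> g; have : lcoset g H \in F by rewrite in_fset_set //; apply/mem_set; exists g.
  move=> /Hxs [x xxs e]; exists x => //; apply/lcosetE; rewrite -e.
  exact: lcoset_self.
have lt : (K < size F)%N by rewrite ltnNge -sz; apply/negP => /nc; apply.
by rewrite lef_pV2 ?posrE ?ltr0n ?ler_nat // (leq_ltn_trans _ lt).
Qed.

End IndexPart.

Section MeanPart.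
Variables (R : realType) (G : groupType) (m : (G -> R) -> R).
Hypothesis hm : is_left_invariant_mean m.
Implicit Types (H N : set G) (x y g : G) (f : G -> R).
Local Notation bnd f := (@Defs.bounded_fun G R f).

Lemma bnd_range f C : (forall x, 0 <= f x <= C) -> bnd f.
Proof. by move=> h; exists C => x; have /andP[h0 h1] := h x; rewrite ger0_norm. Qed.
Lemma bnd_ind A : bnd (ind R A).
Proof. by apply: (@bnd_range _ 1) => x; rewrite ind_ge0 ind_le1. Qed.
Lemma bnd_cst c : bnd (fun _ : G => c).
Proof. by exists `|c|. Qed.
Lemma bnd_add f1 f2 : bnd f1 -> bnd f2 ->
  bnd (fun x => f1 x + f2 x).
Proof.
move=> [C1 h1] [C2 h2]; exists (C1 + C2) => x.
by apply: le_trans (ler_normD _ _) _; apply: lerD.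
Qed.
Lemma bnd_scale c f : bnd f -> bnd (fun x => c * f x).
Proof.
move=> [C h]; exists (`|c| * C) => x; rewrite normrM.
by apply: ler_wpM2l => //.
Qed.
Lemma bnd_sum T (l : seq T) (F : T -> G -> R) : (forall t, bnd (F t)) ->
  bnd (fun x => \sum_(t <- l) F t x).
Proof.
move=> hF; elim: l => [|t l IH].
  by exists 0 => x; rewrite big_nil normr0.
have -> : (fun x => \sum_(t0 <- t :: l) F t0 x) = (fun x => F t x + \sum_(t0 <- l) F t0 x).
  by apply/funext => x; rewrite big_cons.
exact: bnd_add.
Qed.

Lemma m_add f1 f2 : bnd f1 -> bnd f2 ->
  m (fun x => f1 x + f2 x) = m f1 + m f2.
Proof.
move=> b1 b2; have [hl _] := hm; have := hl 1 1 f1 f2 b1 b2.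
by rewrite !mul1r; under eq_fun do rewrite !mul1r.
Qed.
Lemma m_scale c f : bnd f -> m (fun x => c * f x) = c * m f.
Proof.
move=> b; have [hl _] := hm; have := hl c 0 f f b b.
by rewrite mul0r addr0; under eq_fun do rewrite mul0r addr0.
Qed.
Lemma m_cst c : m (fun _ => c) = c.
Proof.
have [_ [_ [h1 _]]] := hm; have := m_scale c (bnd_cst 1).
by rewrite h1 mulr1.
Qed.
Lemma m_sum T (l : seq T) (F : T -> G -> R) : (forall t, bnd (F t)) ->
  m (fun x => \sum_(t <- l) F t x) = \sum_(t <- l) m (F t).
Proof.
move=> hF; elim: l => [|t l IH].
  by rewrite big_nil; under eq_fun do rewrite big_nil; rewrite m_cst.
rewrite big_cons -IH -m_add //; last exact: bnd_sum.
by under eq_fun do rewrite big_cons.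
Qed.
Lemma m_ge0 f : bnd f -> (forall x, 0 <= f x) -> 0 <= m f.
Proof. by have [_ [h _]] := hm; apply: h. Qed.
Lemma m_le f1 f2 : bnd f1 -> bnd f2 ->
  (forall x, f1 x <= f2 x) -> m f1 <= m f2.
Proof.
move=> b1 b2 le; rewrite -subr_ge0.
have [hl _] := hm; have := hl 1 (-1) f2 f1 b2 b1.
rewrite mul1r mulN1r => <-; apply: m_ge0.
  by apply: bnd_add; [apply: bnd_scale|apply: bnd_scale].
by move=> x; rewrite mul1r mulN1r subr_ge0.
Qed.

Lemma m_ind_coset H c : lcosets H c -> m (ind R c) = m (ind R H).
Proof.
move=> /lcosetsP [x ->]; have [_ [_ [_ hi]]] := hm.
rewrite -(hi (x^-1)%g (ind R H) (bnd_ind H)); congr m; apply/funext => z.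
rewrite /ind; case: asboolP => [/lcosetE h|h]; case: asboolP => // h'.
by exfalso; apply: h; apply/lcosetE.
Qed.

Lemma m_ind H : is_subgroup H -> m (ind R H) = inv_index R H.
Proof.
move=> sH; rewrite /inv_index; case: asboolP => fin.
  set F := fset_set (lcosets H).
  have inF c : c \in F -> lcosets H c by rewrite in_fset_set // => /set_mem.
  have one : forall g, \sum_(c <- F) ind R c g = 1.
    move=> g; rewrite big_seq.
    under eq_bigr => c cF do rewrite /ind (asbool_equiv_eq (in_lcosets g sH (inF c cF))).
    rewrite -big_seq sum_ind_count.
    have -> : count (fun c => `[< c = lcoset g H >]) F = count_mem (lcoset g H) F.
      by apply: eq_count => c; apply/asboolP/eqP.
    rewrite count_uniq_mem ?fset_uniq //.
    suff -> : lcoset g H \in F by [].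
    by rewrite in_fset_set //; apply/mem_set; exists g.
  have := m_sum F (fun c => bnd_ind c).
  under eq_fun do rewrite one.
  rewrite m_cst big_seq.
  under eq_bigr => c cF do rewrite (m_ind_coset (inF c cF)).
  rewrite -big_seq sum_cst => e.
  have nz : (size F)%:R != 0 :> R.
    by apply/eqP => h; move: e; rewrite h mul0r => /eqP; rewrite oner_eq0.
  by apply: (mulfI nz); rewrite -e mulfV.
have ge0 : 0 <= m (ind R H) by apply: m_ge0; [apply: bnd_ind|move=> x; apply: ind_ge0].
apply/eqP; rewrite eq_le ge0 andbT.
have bound : forall n : nat, n%:R * m (ind R H) <= 1.
  move=> n; have [B BH szB] := infinite_set_fset n fin.
  have inB c : c \in B -> lcosets H c by move=> /BH.
  have le1 : forall g, \sum_(c <- B) ind R c g <= 1.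
    move=> g; rewrite big_seq.
    under eq_bigr => c cF do rewrite /ind (asbool_equiv_eq (in_lcosets g sH (inB c cF))).
    rewrite -big_seq sum_ind_count.
    have -> : count (fun c => `[< c = lcoset g H >]) B = count_mem (lcoset g H) B.
      by apply: eq_count => c; apply/asboolP/eqP.
    by rewrite count_uniq_mem ?fset_uniq //; case: (_ \in _).
  have := m_le (bnd_sum B (fun c => bnd_ind c)) (bnd_cst 1) le1.
  rewrite m_cst m_sum; last by move=> c; apply: bnd_ind.
  rewrite big_seq.
  under eq_bigr => c cF do rewrite (m_ind_coset (inB c cF)).
  rewrite -big_seq sum_cst; apply: le_trans.
  by apply: ler_wpM2r => //; rewrite ler_nat.
rewrite leNgt; apply/negP => pos.
have := bound (Num.Def.trunc (m (ind R H))^-1).+1.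
apply/negP; rewrite -ltNge -ltr_pdivrMr // div1r.
exact: truncnS_gt.
Qed.

End MeanPart.

Section MeasPart.
Variables (R : realType) (G : groupType).
Implicit Types (H N : set G) (x y g : G) (mu h : G -> R).

Lemma esumZ (T : choiceType) (A : set T) (r : R) (a : T -> \bar R) :
  (0 <= r) -> (forall t, (0 <= a t)%E) ->
  \esum_(i in A) (r%:E * a i)%E = (r%:E * \esum_(i in A) a i)%E.
Proof.
move=> r0 a0; rewrite /esum -ereal_supZl //; last first.
  by apply/set0P; exists 0%E; exists set0; [exact: fsets_set0|rewrite fsbig_set0].
congr ereal_sup; rewrite image_comp; apply: eq_imagel => F _ /=.
by rewrite ge0_mule_fsumr.
Qed.

Definition Int mu h : \bar R := \esum_(x in [set: G]) (mu x * h x)%:E.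
Definition Ir mu h : R := fine (Int mu h).
Definition nb h := exists C, forall x, 0 <= h x <= C.

Variable mu : G -> R.
Hypothesis pmu : is_prob mu.

Lemma mu_ge0 x : 0 <= mu x. Proof. by case: pmu. Qed.

Lemma Int_ge0 h : (forall x, 0 <= h x) -> (0 <= Int mu h)%E.
Proof. by move=> h0; apply: esum_ge0 => x _; rewrite lee_fin mulr_ge0 ?mu_ge0. Qed.

Lemma Int_le h1 h2 : (forall x, 0 <= h1 x <= h2 x) -> (Int mu h1 <= Int mu h2)%E.
Proof.
move=> h; apply: le_esum => x _; rewrite lee_fin; have /andP[_ h'] := h x.
by apply: ler_wpM2l => //; apply: mu_ge0.
Qed.

Lemma Int_cst c : 0 <= c -> Int mu (fun _ => c) = c%:E.
Proof.
move=> c0; rewrite /Int.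
under eq_esum do rewrite mulrC EFinM.
by rewrite esumZ // ?(proj2 pmu) ?mule1 // => t; rewrite lee_fin mu_ge0.
Qed.

Lemma Int_ub h C : (forall x, 0 <= h x <= C) -> (Int mu h <= C%:E)%E.
Proof.
move=> h0; have C0 : 0 <= C by have /andP[a b] := h0 (1%g); apply: le_trans b.
rewrite -Int_cst //; apply: Int_le => x; have /andP[-> ->] := h0 x; by [].
Qed.

Lemma IrE h : nb h -> (Ir mu h)%:E = Int mu h.
Proof.
move=> [C hC]; rewrite /Ir fineK // ge0_fin_numE; last first.
  by apply: Int_ge0 => x; have /andP[] := hC x.
by apply: le_lt_trans (Int_ub hC) _; rewrite ltry.
Qed.

Lemma nb_ind A : nb (ind R A).
Proof. by exists 1 => x; rewrite ind_ge0 ind_le1. Qed.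

Lemma Int_add h1 h2 : (forall x, 0 <= h1 x) -> (forall x, 0 <= h2 x) ->
  Int mu (fun x => h1 x + h2 x) = (Int mu h1 + Int mu h2)%E.
Proof.
move=> p1 p2; rewrite /Int -esumD => [|x _|x _]; last 2 first.
- by rewrite lee_fin mulr_ge0 ?mu_ge0.
- by rewrite lee_fin mulr_ge0 ?mu_ge0.
by apply: eq_esum => x _; rewrite mulrDr EFinD.
Qed.

Lemma Int_scale c h : 0 <= c -> (forall x, 0 <= h x) ->
  Int mu (fun x => c * h x) = (c%:E * Int mu h)%E.
Proof.
move=> c0 p; rewrite /Int -esumZ // => [|x]; last by rewrite lee_fin mulr_ge0 ?mu_ge0.
by apply: eq_esum => x _; rewrite -EFinM mulrCA.
Qed.

Lemma Int_sum (T : choiceType) (l : seq T) (F : T -> G -> R) : (forall t x, 0 <= F t x) ->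
  Int mu (fun x => \sum_(t <- l) F t x) = (\sum_(t <- l) Int mu (F t))%E.
Proof.
move=> p; rewrite /Int -(@esum_sum _ _ _ setT l xpredT (fun x t => (mu x * F t x)%:E)); last first.
  by move=> x t _ _; rewrite lee_fin mulr_ge0 ?mu_ge0.
by apply: eq_esum => x _; rewrite mulr_sumr sumEFin.
Qed.

Lemma Int_ind A : Int mu (ind R A) = \esum_(x in A) (mu x)%:E.
Proof.
rewrite esum_mkcond /Int; apply: eq_esum => x _; rewrite /ind.
case: asboolP => h; rewrite ?mulr1 ?mulr0.
  by rewrite ifT //; apply/mem_set.
by rewrite ifF //; apply/negP => /set_mem.
Qed.

Lemma pmeasE A : pmeas mu A = Ir mu (ind R A).
Proof. by rewrite /pmeas /Ir Int_ind. Qed.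

Lemma pmeas_ge0 A : 0 <= pmeas mu A.
Proof. by rewrite pmeasE /Ir fine_ge0 // Int_ge0 // => x; apply: ind_ge0. Qed.


Lemma nb_add h1 h2 : nb h1 -> nb h2 -> nb (fun x => h1 x + h2 x).
Proof.
move=> [C1 h1C] [C2 h2C]; exists (C1 + C2) => x.
have /andP[a b] := h1C x; have /andP[c d] := h2C x.
by rewrite addr_ge0 // lerD.
Qed.

Lemma nb_scale c h : 0 <= c -> nb h -> nb (fun x => c * h x).
Proof.
move=> c0 [C hC]; exists (c * C) => x; have /andP[a b] := hC x.
by rewrite mulr_ge0 // ler_wpM2l.
Qed.

Lemma nb_sum T (l : seq T) (F : T -> G -> R) : (forall t, nb (F t)) ->
  nb (fun x => \sum_(t <- l) F t x).
Proof.
move=> hF; elim: l => [|t l IH].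
  by exists 0 => x; rewrite big_nil lexx.
have -> : (fun x => \sum_(t0 <- t :: l) F t0 x) = (fun x => F t x + \sum_(t0 <- l) F t0 x).
  by apply/funext => x; rewrite big_cons.
exact: nb_add.
Qed.

Lemma nb_ge0 h : nb h -> forall x, 0 <= h x.
Proof. by move=> [C hC] x; have /andP[] := hC x. Qed.

Lemma Ir_add h1 h2 : nb h1 -> nb h2 ->
  Ir mu (fun x => h1 x + h2 x) = Ir mu h1 + Ir mu h2.
Proof.
move=> n1 n2; apply: EFin_inj.
rewrite EFinD (IrE (nb_add n1 n2)) (IrE n1) (IrE n2).
by rewrite Int_add //; apply: nb_ge0.
Qed.

Lemma Ir_scale c h : 0 <= c -> nb h -> Ir mu (fun x => c * h x) = c * Ir mu h.
Proof.
move=> c0 n; apply: EFin_inj; rewrite EFinM (IrE (nb_scale c0 n)) (IrE n).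
by rewrite Int_scale //; apply: nb_ge0.
Qed.

Lemma Ir_sum (T : choiceType) (l : seq T) (F : T -> G -> R) : (forall t, nb (F t)) ->
  Ir mu (fun x => \sum_(t <- l) F t x) = \sum_(t <- l) Ir mu (F t).
Proof.
move=> n; apply: EFin_inj; rewrite -sumEFin (IrE (nb_sum l n)) Int_sum.
  by apply: eq_bigr => t _; rewrite IrE.
by move=> t; apply: nb_ge0.
Qed.

Lemma Ir_ub h C : (forall x, 0 <= h x <= C) -> Ir mu h <= C.
Proof.
move=> hC; rewrite -lee_fin IrE; last by exists C.
exact: Int_ub.
Qed.

Lemma Ir_ge0 h : (forall x, 0 <= h x) -> 0 <= Ir mu h.
Proof. by move=> h0; rewrite /Ir fine_ge0 // Int_ge0. Qed.

Lemma pmeas_le1 A : pmeas mu A <= 1.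
Proof. by rewrite pmeasE; apply: Ir_ub => x; rewrite ind_ge0 ind_le1. Qed.

End MeasPart.

Section DecompPart.
Variables (R : realType) (G : groupType).
Implicit Types (H N : set G) (x y g : G) (h : G -> R).
Variable mu : G -> R.
Hypothesis pmu : is_prob mu.

Lemma dc_Int : dc_n mu = Ir mu (fun y => pmeas mu (cent y)).
Proof.
rewrite /dc_n /Ir /Int; congr fine.
rewrite (_ : @commuting_pairs G = [set: G] `*`` (fun y => cent y)); last first.
  apply/funext => -[y x]; apply/propext; rewrite /commuting_pairs /cent /=.
  by split=> [e|[_ e]]; [split=> //; exact/esym|exact/esym].
rewrite -(@esum_esum _ _ _ setT (@cent G) (fun y x => (mu y * mu x)%:E)); last first.
  by move=> y x _ _; rewrite lee_fin mulr_ge0 ?mu_ge0.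
apply: eq_esum => y _.
under eq_esum do rewrite EFinM.
rewrite esumZ ?mu_ge0 // => [|x]; last by rewrite lee_fin mu_ge0.
by rewrite EFinM pmeasE (IrE pmu (nb_ind _ _)) Int_ind.
Qed.

Lemma cent_coset N t x y : is_subgroup N -> CN N y -> N (t^-1 * x)%g ->
  (cent t y <-> cent y x).
Proof.
move=> sN Py Nn; rewrite /cent /=.
set n := (t^-1 * x)%g in Nn.
have xe : x = (t * n)%g by rewrite /n mulVKg.
have yn : (n * y = y * n)%g by apply: Py.
rewrite xe; split=> e.
  by rewrite -mulgA yn mulgA -e -mulgA.
by apply: (mulIg n); rewrite -mulgA -e -mulgA yn mulgA.
Qed.

Lemma sum_ind_coset N ts x : (forall g, count (fun t => `[< N (t^-1 * g)%g >]) ts = 1%N) ->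
  \sum_(t <- ts) ind R (lcoset t N) x = 1.
Proof.
move=> hp.
rewrite (eq_bigr (fun t => if `[< N (t^-1 * x)%g >] then 1 else 0)).
  by rewrite sum_ind_count hp.
by move=> t _; rewrite /ind (asbool_equiv_eq (lcosetE t N x)).
Qed.

Lemma pm_cent N ts y : is_subgroup N ->
  (forall g, count (fun t => `[< N (t^-1 * g)%g >]) ts = 1%N) -> CN N y ->
  pmeas mu (cent y) = \sum_(t <- ts) ind R (cent t) y * pmeas mu (lcoset t N).
Proof.
move=> sN hp Py; rewrite pmeasE.
have -> : ind R (cent y) = fun x => \sum_(t <- ts) ind R (cent t) y * ind R (lcoset t N) x.
  apply/funext => x.
  transitivity (\sum_(t <- ts) ind R (cent y) x * ind R (lcoset t N) x).
    by rewrite -mulr_sumr sum_ind_coset // mulr1.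
  apply: eq_bigr => t _; rewrite /ind.
  case: (asboolP (lcoset t N x)) => h; last by rewrite !mulr0.
  by rewrite (asbool_equiv_eq (cent_coset sN Py (iffLR (lcosetE t N x) h))).
rewrite Ir_sum //; last by move=> t; apply: nb_scale; [apply: ind_ge0|apply: nb_ind].
apply: eq_bigr => t _; rewrite Ir_scale ?pmeasE //; [apply: ind_ge0|apply: nb_ind].
Qed.

Definition tailf N : G -> R := fun y => ind R (~` CN N) y * pmeas mu (cent y).

Lemma nb_tail N : nb (tailf N).
Proof.
exists 1 => y; rewrite /tailf mulr_ge0 ?ind_ge0 ?pmeas_ge0 //=.
by rewrite mulr_ile1 ?ind_ge0 ?pmeas_ge0 ?ind_le1 ?pmeas_le1.
Qed.

Lemma dc_decomp N ts : is_subgroup N ->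
  (forall g, count (fun t => `[< N (t^-1 * g)%g >]) ts = 1%N) ->
  dc_n mu = \sum_(t <- ts) pmeas mu (lcoset t N) * pmeas mu (CN N `&` cent t)
            + Ir mu (tailf N).
Proof.
move=> sN hp; rewrite dc_Int.
have -> : (fun y => pmeas mu (cent y)) = (fun y =>
   (\sum_(t <- ts) pmeas mu (lcoset t N) * ind R (CN N `&` cent t) y) + tailf N y).
  apply/funext => y; rewrite /tailf; case: (pselect (CN N y)) => Py.
    rewrite (@indF R G (~` CN N) y) ?mul0r ?addr0; last by [].
    rewrite (pm_cent sN hp Py); apply: eq_bigr => t _; rewrite mulrC; congr (_ * _).
    case: (pselect (cent t y)) => c; first by rewrite !indT.
    by rewrite !indF // => -[].
  rewrite (@indT R G (~` CN N) y) // mul1r big1 ?add0r // => t _.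
  by rewrite indF ?mulr0 // => -[].
have nbt : forall t, nb (fun x => pmeas mu (lcoset t N) * ind R (CN N `&` cent t) x).
  by move=> t; apply: nb_scale; [apply: pmeas_ge0|apply: nb_ind].
rewrite (Ir_add pmu (nb_sum ts nbt) (nb_tail N)) (Ir_sum pmu ts nbt).
congr (_ + _); apply: eq_bigr => t _.
by rewrite (Ir_scale pmu (pmeas_ge0 pmu _) (nb_ind _ _)) !pmeasE.
Qed.

Lemma tail_le N b : 0 <= b -> (forall y, ~ CN N y -> pmeas mu (cent y) <= b) ->
  0 <= Ir mu (tailf N) <= b.
Proof.
move=> b0 hb; rewrite (Ir_ge0 pmu (nb_ge0 (nb_tail N))) /=.
apply: (Ir_ub pmu) => y; rewrite /tailf mulr_ge0 ?ind_ge0 ?pmeas_ge0 //=.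
case: (pselect (CN N y)) => Py; first by rewrite indF ?mul0r.
by rewrite indT ?mul1r //; apply: hb.
Qed.

End DecompPart.

Section LimPart.
Variable R : realType.

Lemma small_inv (e : R) : 0 < e -> exists K : nat, (K.+1%:R)^-1 < e.
Proof.
move=> e0; exists (Num.Def.trunc e^-1).
rewrite -ltf_pV2 ?posrE ?invr_gt0 ?ltr0n // invrK; exact: truncnS_gt.
Qed.

Lemma eq_from_bounds (a b : R) (c : nat -> R) :
  (forall K, c K <= a <= c K + (K.+1%:R)^-1) ->
  (forall K, c K <= b <= c K + (K.+1%:R)^-1) -> a = b.
Proof.
move=> ha hb; apply/eqP; rewrite -subr_eq0 -normr_eq0; apply/eqP.
apply/le_anti; rewrite normr_ge0 andbT; apply/ler_addgt0Pr => e e0.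
have [K hK] := small_inv e0.
have /andP[a1 a2] := ha K; have /andP[b1 b2] := hb K.
rewrite add0r ler_norml; set dd := (K.+1%:R)^-1 in hK a2 b2 *.
by apply/andP; split; lra.
Qed.

Lemma lim_core (u : nat -> R) (c : nat -> R) :
  (forall K (e : R), 0 < e -> exists N0, forall n, (N0 <= n)%N ->
      c K - e <= u n /\ u n <= c K + (K.+1%:R)^-1 + e) ->
  u @ \oo --> limn_sup u /\ forall K, c K <= limn_sup u <= c K + (K.+1%:R)^-1.
Proof.
move=> hu.
have cv : cvgn u.
  apply: cauchy_cvg; apply: cauchy_exP => e e0.
  have e20 : 0 < e / 2 by rewrite divr_gt0.
  have [K hK] := small_inv e20.
  have e40 : 0 < e / 4 by rewrite divr_gt0.
  have [N0 hN0] := hu K _ e40.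
  exists (c K + (K.+1%:R)^-1 / 2); exists N0 => // n /= hn.
  rewrite -ball_normE /ball_ /=.
  have [h1 h2] := hN0 n hn.
  have dpos : 0 <= (K.+1%:R)^-1 :> R by rewrite invr_ge0.
  rewrite ltr_norml; set dd := (K.+1%:R)^-1 in hK dpos h1 h2 *.
  by apply/andP; split; lra.
have ul : u @ \oo --> limn u by [].
have [_ ->] := cvg_limn_inf_sup ul.
split=> // K; apply/andP; split.
  apply/ler_addgt0Pr => e e0; rewrite -lerBlDr.
  apply: limr_ge => //; have [N0 hN0] := hu K _ e0.
  by exists N0 => // n /= /hN0 [].
apply/ler_addgt0Pr => e e0.
apply: limr_le => //; have [N0 hN0] := hu K _ e0.
by exists N0 => // n /= /hN0 [].
Qed.

End LimPart.

Section EstPart.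
Variables (R : realType) (G : groupType).
Implicit Types (H N : set G) (x y g : G).

Lemma ind_cent_decomp N (ts : seq G) y : is_subgroup N ->
  (forall g, count (fun t => `[< N (t^-1 * g)%g >]) ts = 1%N) -> CN N y ->
  ind R (cent y) = fun x => \sum_(t <- ts) ind R (cent t) y * ind R (lcoset t N) x.
Proof.
move=> sN hp Py; apply/funext => x.
transitivity (\sum_(t <- ts) ind R (cent y) x * ind R (lcoset t N) x).
  by rewrite -mulr_sumr sum_ind_coset // mulr1.
apply: eq_bigr => t _; rewrite /ind.
case: (asboolP (lcoset t N x)) => h; last by rewrite !mulr0.
by rewrite (asbool_equiv_eq (cent_coset sN Py (iffLR (lcosetE t N x) h))).
Qed.

Lemma prod_bound (a q b r del : R) : `|a - q| < del -> `|b - r| < del ->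
  0 <= b <= 1 -> 0 <= q <= 1 -> `|a * b - q * r| <= 2 * del.
Proof.
move=> ha hb /andP[b0 b1] /andP[q0 q1].
have -> : a * b - q * r = (a - q) * b + q * (b - r) by ring.
apply: le_trans (ler_normD _ _) _; rewrite !normrM (ger0_norm b0) (ger0_norm q0).
have h1 : `|a - q| * b <= del.
  by apply: le_trans (ler_wpM2l (normr_ge0 _) b1) _; rewrite mulr1 ltW.
have h2 : q * `|b - r| <= del.
  by apply: le_trans (ler_wpM2r (normr_ge0 _) q1) _; rewrite mul1r ltW.
by rewrite mulr2n mulrDl mul1r lerD.
Qed.

Lemma est_meas (M : nat -> G -> R) N (ts : seq G) (K : nat) :
  measures_index_uniformly M -> is_subgroup N ->
  (forall g, count (fun t => `[< N (t^-1 * g)%g >]) ts = 1%N) ->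
  (forall y, ~ CN N y -> inv_index R (cent y) <= (K.+1%:R)^-1) ->
  forall e : R, 0 < e -> exists n0 : nat, forall n, (n0 <= n)%N ->
    \sum_(t <- ts) inv_index R N * inv_index R (CN N `&` cent t) - e <= dc_n (M n) /\
    dc_n (M n) <= \sum_(t <- ts) inv_index R N * inv_index R (CN N `&` cent t)
                  + (K.+1%:R)^-1 + e.
Proof.
move=> [pM unif] sN hp NC e e0.
set s := size ts.
have s0 : (0 < (s.*2.+1)%:R :> R) by rewrite ltr0n.
set del := e / (s.*2.+1)%:R.
have del0 : 0 < del by rewrite divr_gt0.
have [N0 hN0] := unif del del0.
exists N0 => n hn.
have pmu := pM n.
have Ha t : `|pmeas (M n) (lcoset t N) - inv_index R N| < del by apply: hN0.
have Hb t : `|pmeas (M n) (CN N `&` cent t) - inv_index R (CN N `&` cent t)| < del.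
  by have := hN0 n hn 1%g _ (sgI (sg_CN N) (sg_cent t)); rewrite lcoset1.
have Hc y : ~ CN N y -> pmeas (M n) (cent y) <= (K.+1%:R)^-1 + del.
  move=> nP; have := hN0 n hn 1%g (cent y) (sg_cent y); rewrite lcoset1.
  rewrite ltr_norml => /andP[_ h].
  rewrite -[pmeas _ _](subrK (inv_index R (cent y))) addrC.
  by apply: lerD; [exact: NC|exact: ltW].
have b0 : 0 <= (K.+1%:R)^-1 + del by rewrite addr_ge0 ?invr_ge0 // ltW.
have /andP[T0 T1] := tail_le pmu b0 Hc.
rewrite (dc_decomp pmu sN hp).
set S := \sum_(t <- ts) _.
set cc := \sum_(t <- ts) _.
have HS : `|S - cc| <= s%:R * (2 * del).
  rewrite /S /cc -sumrB; apply: le_trans (ler_norm_sum _ _ _) _.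
  rewrite -sum_cst; apply: ler_sum => t _; apply: prod_bound.
  - by rewrite distrC; exact: Ha.
  - by rewrite distrC; exact: Hb.
  - by rewrite inv_index_ge0 inv_index_le1.
  - by rewrite (pmeas_ge0 pmu) (pmeas_le1 pmu).
have mE : (s.*2.+1)%:R = 2 * s%:R + 1 :> R.
  by rewrite -addn1 natrD -muln2 natrM mulrC.
have nz : 2 * s%:R + 1 != 0 :> R by rewrite -mE gt_eqF.
have He : s%:R * (2 * del) + del = e.
  by rewrite /del mE; field.
move: HS; rewrite ler_norml => /andP[HS1 HS2].
set X := s%:R * (2 * del) in HS1 HS2 He.
set d := (K.+1%:R)^-1 in T1 *.
set T := Ir (M n) _ in T0 T1 *.
split; lra.
Qed.

End EstPart.

Section MeanEst.
Variables (R : realType) (G : groupType).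
Implicit Types (H N : set G) (x y g : G).

Lemma est_mean (m : (G -> R) -> R) N (ts : seq G) (K : nat) :
  is_left_invariant_mean m -> is_subgroup N ->
  (forall g, count (fun t => `[< N (t^-1 * g)%g >]) ts = 1%N) ->
  (forall y, ~ CN N y -> inv_index R (cent y) <= (K.+1%:R)^-1) ->
  \sum_(t <- ts) inv_index R N * inv_index R (CN N `&` cent t) <= dc_mean m <=
  \sum_(t <- ts) inv_index R N * inv_index R (CN N `&` cent t) + (K.+1%:R)^-1.
Proof.
move=> hm sN hp NC.
have fe : (fun y => m (fun x => comm_ind R x y)) = (fun y => inv_index R (cent y)).
  by apply/funext => y; rewrite -(m_ind hm (sg_cent y)).
rewrite /dc_mean fe.
set q := inv_index R N.
set tail := fun y => ind R (~` CN N) y * inv_index R (cent y).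
have dec : (fun y => inv_index R (cent y)) =
   (fun y => \sum_(t <- ts) q * ind R (CN N `&` cent t) y + tail y).
  apply/funext => y; rewrite /tail /=; case: (pselect (CN N y)) => Py.
    rewrite (@indF R G (~` CN N) y) ?mul0r ?addr0; last by [].
    rewrite -(m_ind hm (sg_cent y)) (ind_cent_decomp R sN hp Py).
    rewrite (m_sum hm); last by move=> t; apply: bnd_scale; apply: bnd_ind.
    apply: eq_bigr => t _; rewrite (m_scale hm _ (bnd_ind R _)).
    rewrite (m_ind_coset hm (H := N)); last by apply/lcosetsP; exists t.
    rewrite (m_ind hm sN) mulrC; congr (_ * _).
    case: (pselect (cent t y)) => c; first by rewrite !indT.
    by rewrite !indF // => -[].
  rewrite (@indT R G (~` CN N) y) // mul1r big1 ?add0r // => t _.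
  by rewrite indF ?mulr0 // => -[].
have tb : forall y, 0 <= tail y <= (K.+1%:R)^-1.
  move=> y; rewrite /tail; case: (pselect (CN N y)) => Py.
    by rewrite indF ?mul0r ?lexx ?invr_ge0 //=; apply. 
  by rewrite indT // mul1r inv_index_ge0 NC.
have btail : @Defs.bounded_fun G R tail by apply: bnd_range tb.
have bt : forall t, @Defs.bounded_fun G R (fun y => q * ind R (CN N `&` cent t) y).
  by move=> t; apply: bnd_scale; apply: bnd_ind.
have ms : \sum_(t <- ts) m (fun y => q * ind R (CN N `&` cent t) y) =
          \sum_(t <- ts) q * inv_index R (CN N `&` cent t).
  apply: eq_bigr => t _.
  by rewrite (m_scale hm _ (bnd_ind R _)) (m_ind hm (sgI (sg_CN N) (sg_cent t))).
rewrite dec (m_add hm (bnd_sum ts bt) btail) (m_sum hm _ bt) /= ms.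
have T0 : 0 <= m tail by apply: (m_ge0 hm btail) => y; have /andP[] := tb y.
have T1 : m tail <= (K.+1%:R)^-1.
  rewrite -[X in _ <= X](m_cst hm); apply: (m_le hm btail (bnd_cst _ _)).
  by move=> y; have /andP[] := tb y.
by rewrite lerDl T0 /= lerD2l.
Qed.

End MeanEst.

Unset Implicit Arguments.

Theorem theorem1p19 (R : realType) (G : groupType) (M : nat -> G -> R) :
  finitely_generated G ->
  measures_index_uniformly M ->
  [/\ dc_seq M @ \oo --> dcM M,
      (forall M' : nat -> G -> R, measures_index_uniformly M' -> dcM M' = dcM M)
    & (amenable G R ->
       forall m : (G -> R) -> R, is_left_invariant_mean m -> dc_mean m = dcM M)].
Proof.
move=> fg hM.
have hK : forall K : nat, exists p : (set G * seq G)%type,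
   [/\ is_subgroup p.1,
       (forall g, count (fun t => `[< p.1 (t^-1 * g)%g >]) p.2 = 1%N) &
       (forall y, ~ CN p.1 y -> inv_index R (cent y) <= (K.+1%:R)^-1)].
  move=> K; have [N [ts [sN hp HN]]] := fg_N K fg.
  exists (N, ts); split=> // y nP.
  apply: inv_index_nocover (sg_cent y) _ => xs sz cv.
  by apply: nP => n Nn; apply: (HN _ _ (sg_cent y) sz cv n Nn).
have [D hD] := choice hK.
pose c K := \sum_(t <- (D K).2) inv_index R (D K).1 * inv_index R (CN (D K).1 `&` cent t).
have core : forall M' : nat -> G -> R, measures_index_uniformly M' ->
    dc_seq M' @ \oo --> dcM M' /\
    forall K, c K <= dcM M' <= c K + (K.+1%:R)^-1.
  move=> M' hM'; apply: lim_core => K e e0.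
  have [sN hp NC] := hD K.
  exact: est_meas hM' sN hp NC e e0.
have [cvM bM] := core M hM.
split=> //.
  by move=> M' hM'; have [_ bM'] := core M' hM'; apply: eq_from_bounds bM' bM.
move=> _ m hm; apply: eq_from_bounds _ bM => K.
have [sN hp NC] := hD K.
exact: est_mean hm sN hp NC.
Qed.
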